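(* Fix integers $0\le k\le n$ and on $\mathbb{C}^n=\mathbb{R}^{2n}$ with coordinates $(x,y)$ let $\alpha=\sum_{i=1}^n x_i^2$, $\beta=\sum_{i\le k}x_i^2+\sum_{i>k}y_i^2$, and $L_1=\{\alpha=0\}$, $L_2=\{\beta=0\}$. Set \[v_0=\sum_i\Big(\alpha y_i\delta_{i>k}\frac{\partial}{\partial x_i}+(\beta-\alpha\delta_{i\le k})x_i\frac{\partial}{\partial y_i}\Big),\qquad w_0=-J_{\mathbb{C}^n}v_0,\] where $J_{\mathbb{C}^n}$ is multiplication by $\sqrt{-1}$ (so $J_{\mathbb{C}^n}\partial_{x_i}=\partial_{y_i}$). Outside $L_1\cup L_2$, the matrix $M_0$ representing the form $dd^c\sqrt{\alpha\beta}(\cdot,\sqrt{-1}\cdot)$ in the standard basis $\{\partial_{x_1},\dots,\partial_{x_n},\partial_{y_1},\dots,\partial_{y_n}\}$ equals (a) $\dfrac{2\sum_{i\le k}x_i^2}{\sqrt{\alpha\beta}}\,\mathrm{Id}$ on $\mathrm{span}_{\mathbb{R}}\{v_0,w_0\}$, and (b) $\dfrac{\alpha+\beta}{\sqrt{\alpha\beta}}\,\mathrm{Id}$ on the orthogonal complement $\mathrm{span}_{\mathbb{R}}\{v_0,w_0\}^\perp$, with the convention $\sum_{i\le k}x_i^2=0$ if $k=0$. In particular, $\sqrt{\alpha\beta}M_0$ is a multiple of the identity precisely on $L_1\cup L_2\cup S_0$, where $S_0=\{x_i=y_i=0\ |\ i>k\}$.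
   Context: $\delta_{i\le k}$ equals $1$ if $i\le k$ and $0$ otherwise; $\delta_{i>k}=1-\delta_{i\le k}$. For a smooth function $f$, the symmetric form $dd^cf(\cdot,\sqrt{-1}\cdot)$ is normalized so that $dd^cf(u,\sqrt{-1}v)=D^2f(u,v)+D^2f(J_{\mathbb{C}^n}u,J_{\mathbb{C}^n}v)$ (e.g. it equals $2\,\mathrm{Id}$ for $f=\sum_i y_i^2$). *)

(* Defs.v *)
From HB Require Import structures.
From mathcomp Require Import all_boot all_order all_algebra.
From mathcomp Require Import all_classical all_reals all_analysis.
Set Implicit Arguments. Unset Strict Implicit. Unset Printing Implicit Defensive.
Import Order.TTheory GRing.Theory Num.Theory.
Import numFieldNormedType.Exports.
Local Open Scope ring_scope.

Section Defs.
Variables (R : realType) (n : nat).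

(* A point of C^n = R^(2n) is a row vector p = (x | y) : 'rV_(n+n),
   x_i = p 0 (lshift n i), y_i = p 0 (rshift n i); indices are 0-based,
   so the paper's "i <= k" (1-based) is "(i < k)%N" here. *)
Definition xc (p : 'rV[R]_(n + n)) (i : 'I_n) : R := lsubmx p 0 i.
Definition yc (p : 'rV[R]_(n + n)) (i : 'I_n) : R := rsubmx p 0 i.

Definition alpha (p : 'rV[R]_(n + n)) : R := \sum_(i < n) xc p i ^+ 2.
Definition sumxk (k : nat) (p : 'rV[R]_(n + n)) : R :=
  \sum_(i < n | (i < k)%N) xc p i ^+ 2.
Definition beta (k : nat) (p : 'rV[R]_(n + n)) : R :=
  sumxk k p + \sum_(i < n | (k <= i)%N) yc p i ^+ 2.

Definition Jc (u : 'rV[R]_(n + n)) : 'rV[R]_(n + n) :=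
  row_mx (- rsubmx u) (lsubmx u).

Definition v0 (k : nat) (p : 'rV[R]_(n + n)) : 'rV[R]_(n + n) :=
  row_mx (\row_i (if (k <= i)%N then alpha p * yc p i else 0))
         (\row_i ((beta k p - (if (i < k)%N then alpha p else 0)) * xc p i)).
Definition w0 (k : nat) (p : 'rV[R]_(n + n)) : 'rV[R]_(n + n) := - Jc (v0 k p).

Definition dot (u v : 'rV[R]_(n + n)) : R := \sum_i u 0 i * v 0 i.

Definition D2 (f : 'rV[R]_(n + n) -> R) (p u v : 'rV[R]_(n + n)) : R :=
  'D_u ('D_v f) p.

(* dd^c f(u, sqrt(-1) v) = D^2 f(u,v) + D^2 f(Ju, Jv) *)
Definition ddc (f : 'rV[R]_(n + n) -> R) (p u v : 'rV[R]_(n + n)) : R :=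
  D2 f p u v + D2 f p (Jc u) (Jc v).

Definition fab (k : nat) (p : 'rV[R]_(n + n)) : R := Num.sqrt (alpha p * beta k p).

Definition M0 (k : nat) (p : 'rV[R]_(n + n)) : 'M[R]_(n + n) :=
  \matrix_(i, j) ddc (fab k) p (delta_mx 0 i) (delta_mx 0 j).

Definition S0 (k : nat) (p : 'rV[R]_(n + n)) : Prop :=
  forall i : 'I_n, (k <= i)%N -> xc p i = 0 /\ yc p i = 0.

End Defs.

(* Main.v *)
Require Import Defs.
From HB Require Import structures.
From mathcomp Require Import all_boot all_order all_algebra.
From mathcomp Require Import all_classical all_reals all_analysis.
From mathcomp Require Import ring lra.
Set Implicit Arguments. Unset Strict Implicit. Unset Printing Implicit Defensive.
Import Order.TTheory GRing.Theory Num.Theory.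
Import numFieldNormedType.Exports.
Local Open Scope ring_scope.

Section Anal.
Variables (R : realType) (m : nat).
Local Notation V := 'rV[R]_m.

Lemma is_derive_coord (a v : V) j : is_derive a v (fun q : V => q 0 j) (v 0 j).
Proof.
have @f : {linear 'M[R]_(1, m) -> R}.
  by exists (fun N : 'M[R]_(_, _) => N 0 j); do 2![eexists]; do ?[constructor];
     rewrite ?mxE// => ? *; rewrite ?mxE//; move=> ?; rewrite !mxE.
apply: DeriveDef; first exact/diff_derivable/differentiable_coord.
rewrite deriveE; last exact/differentiable_coord.
rewrite (_ : (fun _ => _) = f) // diff_lin //; exact: coord_continuous.
Qed.

Lemma is_deriveM' (f g : V -> R) a v df dg : is_derive a v f df -> is_derive a v g dg ->
  is_derive a v (fun q => f q * g q) (f a * dg + g a * df).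
Proof. move=> H1 H2; exact: (is_deriveM H1 H2). Qed.

Lemma is_deriveD' (f g : V -> R) a v df dg : is_derive a v f df -> is_derive a v g dg ->
  is_derive a v (fun q => f q + g q) (df + dg).
Proof. move=> H1 H2; exact: (is_deriveD H1 H2). Qed.

Lemma is_derive_sumP n (P : pred 'I_n) (F : 'I_n -> V -> R) dF a v :
  (forall i, P i -> is_derive a v (F i) (dF i)) ->
  is_derive a v (fun q => \sum_(i < n | P i) F i q) (\sum_(i < n | P i) dF i).
Proof.
move=> H.
have -> : (fun q => \sum_(i < n | P i) F i q) = \sum_(i < n) (fun q => if P i then F i q else 0).
  apply: funext => q; rewrite big_mkcond /= fct_sumE //.
have HH := (@is_derive_sum _ _ _ _ (fun i q => if P i then F i q else 0) a v (fun i => if P i then dF i else 0)).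
have HH' : forall i, is_derive a v (fun q => if P i then F i q else 0) (if P i then dF i else 0).
  move=> i; case Pi: (P i).
    exact: H.
  exact: is_derive_cst.
apply: (is_derive_eq (HH HH')).
by rewrite [RHS]big_mkcond.
Qed.

End Anal.

Section Anal2.
Variables (R : realType) (m : nat).
Local Notation V := 'rV[R]_m.

Lemma is_derive_ext (f g : V -> R) a v df dg : (forall q, f q = g q) -> df = dg ->
  is_derive a v f df -> is_derive a v g dg.
Proof. by move=> /funext -> ->. Qed.

Lemma deriveD1 (f : V -> R) a v : 'D_v f a = 'D_1 (fun h : R => f (h *: v + a)) 0.
Proof.
rewrite /derive; set g1 := fun h => h^-1 *: _; set g2 := fun h => h^-1 *: _.
suff -> : g1 = g2 by [].
apply: funext => h; rewrite /g1 /g2 /shift /= addr0 scale0r add0r.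
by rewrite /GRing.scale /= mulr1.
Qed.

Lemma is_derive_sqrt (f : V -> R) a v df : 0 < f a -> is_derive a v f df ->
  is_derive a v (fun q => Num.sqrt (f q)) (df / (2 * Num.sqrt (f a))).
Proof.
move=> fa [d1 d2].
pose phi := fun h : R => f (h *: v + a).
have phi_der : derivable phi 0 1 by exact: (derivable1P f a v).1 d1.
have phi0 : phi 0 = f a by rewrite /phi scale0r add0r.
have g_der : derivable (@Num.sqrt R) (phi 0) 1.
  rewrite phi0; have := is_derive1_sqrt fa; by case.
have comp_der : derivable (Num.sqrt \o phi) 0 1.
  apply/(derivable1_diffP (Num.sqrt \o phi) 0).
  apply: (differentiable_comp (f := phi) (g := @Num.sqrt R) (x := 0)).
  exact/(derivable1_diffP phi 0).
  exact/(derivable1_diffP (@Num.sqrt R) (phi 0)).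
have H := derive1_comp phi_der g_der.
have Dphi : 'D_1 phi 0 = df by rewrite -d2 deriveD1.
have DD : 'D_1 (Num.sqrt \o phi) 0 = df / (2 * Num.sqrt (f a)).
  rewrite -[LHS]derive1E H.
  rewrite [X in X * _]derive1E [X in _ * X]derive1E Dphi phi0 derive_sqrt //.
  by rewrite mulrC.
apply: DeriveDef.
  by apply/(derivable1P (fun q => Num.sqrt (f q)) a v).
by rewrite deriveD1; exact: DD.
Qed.

Lemma is_deriveV' (f : V -> R) a v df : f a != 0 -> is_derive a v f df ->
  is_derive a v (fun q => (f q)^-1) (- (f a)^-2 * df).
Proof.
move=> fa [d1 d2]; apply: DeriveDef; first exact: derivableV.
by rewrite deriveV // d2.
Qed.

Lemma continuous_sumP n (P : pred 'I_n) (F : 'I_n -> V -> R) a :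
  (forall i, P i -> {for a, continuous (F i)}) ->
  {for a, continuous (fun q => \sum_(i < n | P i) F i q)}.
Proof.
move=> H.
have -> : (fun q => \sum_(i < n | P i) F i q) = \sum_(i < n) (fun q => if P i then F i q else 0).
  apply: funext => q; rewrite big_mkcond /= fct_sumE //.
elim/big_ind: _.
- exact: cst_continuous.
- by move=> f g cf cg; apply: continuousD.
- move=> i _; case Pi: (P i); first exact: H.
  exact: cst_continuous.
Qed.

End Anal2.

Section Spec.
Variables (R : realType) (n k : nat).
Local Notation V := 'rV[R]_(n + n).

Definition Af (u w : V) : R := \sum_(i < n) xc u i * xc w i.
Definition Bf (u w : V) : R := \sum_(i < n | (i < k)%N) xc u i * xc w i
  + \sum_(i < n | (k <= i)%N) yc u i * yc w i.

Lemma xcE (q : V) i : xc q i = q 0 (lshift n i).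
Proof. by rewrite /xc mxE. Qed.
Lemma ycE (q : V) i : yc q i = q 0 (rshift n i).
Proof. by rewrite /yc mxE. Qed.

Lemma der_xc (a v : V) i : is_derive a v (fun q => xc q i) (xc v i).
Proof.
apply: (is_derive_ext (f := fun q : V => q 0 (lshift n i))) => [q||]; rewrite ?xcE //.
exact: is_derive_coord.
Qed.
Lemma der_yc (a v : V) i : is_derive a v (fun q => yc q i) (yc v i).
Proof.
apply: (is_derive_ext (f := fun q : V => q 0 (rshift n i))) => [q||]; rewrite ?ycE //.
exact: is_derive_coord.
Qed.
Lemma cont_xc (a : V) i : {for a, continuous (fun q : V => xc q i)}.
Proof.
have -> : (fun q : V => xc q i) = (fun q : V => q 0 (lshift n i)) by apply: funext => q; rewrite xcE.
exact: coord_continuous.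
Qed.
Lemma cont_yc (a : V) i : {for a, continuous (fun q : V => yc q i)}.
Proof.
have -> : (fun q : V => yc q i) = (fun q : V => q 0 (rshift n i)) by apply: funext => q; rewrite ycE.
exact: coord_continuous.
Qed.

Lemma alphaE (q : V) : alpha q = Af q q.
Proof. by apply: eq_bigr => i _; rewrite expr2. Qed.
Lemma betaE (q : V) : beta k q = Bf q q.
Proof.
rewrite /beta /sumxk /Bf; congr (_ + _); apply: eq_bigr => i _; by rewrite expr2.
Qed.

Lemma der_prod (F G : V -> R) a v dF dG :
  is_derive a v F dF -> is_derive a v G dG ->
  is_derive a v (fun q => F q * G q) (F a * dG + G a * dF).
Proof. exact: is_deriveM'. Qed.

Lemma der_cst (c : R) (a v : V) : is_derive a v (fun _ : V => c) 0.
Proof. exact: is_derive_cst. Qed.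

Lemma der_prodE (F G : V -> R) a v dF dG d :
  is_derive a v F dF -> is_derive a v G dG -> d = F a * dG + G a * dF ->
  is_derive a v (fun q => F q * G q) d.
Proof. by move=> H1 H2 ->; exact: is_deriveM'. Qed.

Lemma der_Af_l (a v c : V) : is_derive a v (fun q => Af q c) (Af v c).
Proof.
apply: (is_derive_sumP (P := xpredT) (F := fun i q => xc q i * xc c i)) => i _.
apply: (der_prodE (F := fun q => xc q i) (G := fun _ => xc c i)); try (exact: der_xc); try (exact: der_yc); try (exact: der_cst).
by rewrite mulr0 add0r mulrC.
Qed.

Lemma der_Bf_l (a v c : V) : is_derive a v (fun q => Bf q c) (Bf v c).
Proof.
apply: is_deriveD'.
  apply: (is_derive_sumP (F := fun i q => xc q i * xc c i)) => i _.
  apply: (der_prodE (F := fun q => xc q i) (G := fun _ => xc c i)); try (exact: der_xc); try (exact: der_yc); try (exact: der_cst).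
  by rewrite mulr0 add0r mulrC.
apply: (is_derive_sumP (F := fun i q => yc q i * yc c i)) => i _.
apply: (der_prodE (F := fun q => yc q i) (G := fun _ => yc c i)); try (exact: der_xc); try (exact: der_yc); try (exact: der_cst).
by rewrite mulr0 add0r mulrC.
Qed.

Lemma der_alpha (a v : V) : is_derive a v (fun q => alpha q) (2 * Af a v).
Proof.
apply: (is_derive_ext (f := fun q => \sum_(i < n | xpredT i) xc q i * xc q i)
   (df := \sum_(i < n | xpredT i) (xc a i * xc v i + xc a i * xc v i))).
- by move=> q; rewrite alphaE.
- rewrite /Af mulr_sumr; apply: eq_bigr => i _; ring.
apply: (is_derive_sumP (F := fun i q => xc q i * xc q i)) => i _.
apply: (der_prodE (F := fun q => xc q i) (G := fun q => xc q i)); try exact: der_xc.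
by rewrite mulrC.
Qed.

Lemma der_beta (a v : V) : is_derive a v (fun q => beta k q) (2 * Bf a v).
Proof.
apply: (is_derive_ext (f := fun q => \sum_(i < n | (i < k)%N) xc q i * xc q i
  + \sum_(i < n | (k <= i)%N) yc q i * yc q i)
   (df := \sum_(i < n | (i < k)%N) (xc a i * xc v i + xc a i * xc v i)
     + \sum_(i < n | (k <= i)%N) (yc a i * yc v i + yc a i * yc v i))).
- by move=> q; rewrite betaE.
- rewrite /Bf mulrDr !mulr_sumr; congr (_ + _); apply: eq_bigr => i _; ring.
apply: is_deriveD'.
  apply: (is_derive_sumP (F := fun i q => xc q i * xc q i)) => i _.
  apply: (der_prodE (F := fun q => xc q i) (G := fun q => xc q i)); try exact: der_xc.
  by rewrite mulrC.
apply: (is_derive_sumP (F := fun i q => yc q i * yc q i)) => i _.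
apply: (der_prodE (F := fun q => yc q i) (G := fun q => yc q i)); try exact: der_yc.
by rewrite mulrC.
Qed.

Lemma cont_h (a : V) : {for a, continuous (fun q => alpha q * beta k q)}.
Proof.
apply: (continuousM (s := fun q => alpha q) (t := fun q => beta k q)).
  apply: (continuous_sumP (F := fun i q => xc q i ^+ 2)) => i _.
  have -> : (fun q => xc q i ^+ 2) = (fun q : V => xc q i) \* (fun q => xc q i).
    by apply: funext => q; rewrite /= expr2.
  apply: continuousM; exact: cont_xc.
apply: continuousD.
  apply: (continuous_sumP (F := fun i q => xc q i ^+ 2)) => i _.
  have -> : (fun q => xc q i ^+ 2) = (fun q : V => xc q i) \* (fun q => xc q i).
    by apply: funext => q; rewrite /= expr2.
  apply: continuousM; exact: cont_xc.
apply: (continuous_sumP (F := fun i q => yc q i ^+ 2)) => i _.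
have -> : (fun q => yc q i ^+ 2) = (fun q : V => yc q i) \* (fun q => yc q i).
  by apply: funext => q; rewrite /= expr2.
apply: continuousM; exact: cont_yc.
Qed.


Definition NN (v q : V) := alpha q * (2 * Bf q v) + beta k q * (2 * Af q v).
Definition G1 (v q : V) := NN v q * (2 * Num.sqrt (alpha q * beta k q))^-1.

Lemma der_h (q v : V) : is_derive q v (fun q => alpha q * beta k q)
   (alpha q * (2 * Bf q v) + beta k q * (2 * Af q v)).
Proof.
apply: (der_prodE (F := fun q => alpha q) (G := fun q => beta k q)) => //.
  exact: der_alpha.
exact: der_beta.
Qed.

Lemma der_fab (q v : V) : 0 < alpha q * beta k q -> is_derive q v (fab k) (G1 v q).
Proof.
move=> hq.
apply: (is_derive_ext (f := fun q => Num.sqrt (alpha q * beta k q))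
  (df := (alpha q * (2*Bf q v) + beta k q * (2 * Af q v)) / (2 * Num.sqrt (alpha q * beta k q)))) => //.
apply: (is_derive_sqrt (f := fun q => alpha q * beta k q)) => //.
exact: der_h.
Qed.

Lemma D1_near (p v : V) : 0 < alpha p * beta k p ->
  \forall q \near p, 'D_v (fab k) q = G1 v q.
Proof.
move=> hp.
have H := cvgr_gt _ (cont_h (a:=p)) 0 hp.
near=> q.
have hq : 0 < alpha q * beta k q by near: q; exact: H.
exact: (@derive_val _ _ _ _ _ _ _ (der_fab v hq)).
Unshelve. all: by end_near.
Qed.

Definition Phi (p u v : V) :=
  let s := Num.sqrt (alpha p * beta k p) in
  (beta k p * Af u v + alpha p * Bf u v + 2 * (Af p u * Bf p v + Af p v * Bf p u)) / s
  - (beta k p * Af p u + alpha p * Bf p u) * (beta k p * Af p v + alpha p * Bf p v) / s ^+ 3.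

Lemma der_N (p u v : V) : is_derive p u (NN v)
  ((alpha p * (2 * Bf u v) + (2 * Bf p v) * (2 * Af p u)) +
   (beta k p * (2 * Af u v) + (2 * Af p v) * (2 * Bf p u))).
Proof.
apply: is_deriveD'.
  apply: (der_prodE (F := fun q => alpha q) (G := fun q => 2 * Bf q v)) => //.
    exact: der_alpha.
  apply: (der_prodE (F := fun _ => 2) (G := fun q => Bf q v)) => //.
    exact: der_Bf_l.
  by rewrite mulr0 addr0.
apply: (der_prodE (F := fun q => beta k q) (G := fun q => 2 * Af q v)) => //.
  exact: der_beta.
apply: (der_prodE (F := fun _ => 2) (G := fun q => Af q v)) => //.
  exact: der_Af_l.
by rewrite mulr0 addr0.
Qed.

Lemma D2_formula (p u v : V) : alpha p != 0 -> beta k p != 0 ->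
  D2 (fab k) p u v = Phi p u v.
Proof.
move=> a0 b0.
have age : 0 <= alpha p by apply: sumr_ge0 => i _; exact: sqr_ge0.
have bge : 0 <= beta k p.
  by apply: addr_ge0; apply: sumr_ge0 => i _; exact: sqr_ge0.
have hp : 0 < alpha p * beta k p.
  by rewrite mulr_gt0 // lt_def ?a0 ?b0.
have s0 : Num.sqrt (alpha p * beta k p) != 0 by rewrite gt_eqF // sqrtr_gt0.
rewrite /D2 (near_eq_derive _ (D1_near v hp)).
apply: (@derive_val _ _ _ _ _ _ _ _).
apply: (der_prodE (F := NN v) (G := fun q => (2 * Num.sqrt (alpha q * beta k q))^-1)).
- exact: der_N.
- apply: (is_deriveV' (f := fun q => 2 * Num.sqrt (alpha q * beta k q))).
    by rewrite mulf_neq0.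
  apply: (der_prodE (F := fun _ => 2) (G := fun q => Num.sqrt (alpha q * beta k q))) => //.
    apply: (is_derive_sqrt (f := fun q => alpha q * beta k q)) => //.
    exact: der_h.
- rewrite /Phi /NN /=.
  set s := Num.sqrt _.
  field.
  by rewrite s0.
Qed.

End Spec.



Section Coord.
Variables (R : realType) (n : nat).
Local Notation V := 'rV[R]_(n + n).
Implicit Types u w x y : V.

Lemma xcD u w i : xc (u + w) i = xc u i + xc w i.
Proof. by rewrite !xcE !mxE. Qed.
Lemma ycD u w i : yc (u + w) i = yc u i + yc w i.
Proof. by rewrite !ycE !mxE. Qed.
Lemma xcZ (a : R) u i : xc (a *: u) i = a * xc u i.
Proof. by rewrite !xcE !mxE. Qed.
Lemma ycZ (a : R) u i : yc (a *: u) i = a * yc u i.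
Proof. by rewrite !ycE !mxE. Qed.
Lemma xcN u i : xc (- u) i = - xc u i.
Proof. by rewrite !xcE !mxE. Qed.
Lemma ycN u i : yc (- u) i = - yc u i.
Proof. by rewrite !ycE !mxE. Qed.
Lemma xc_row (X Y : 'rV[R]_n) i : xc (row_mx X Y) i = X 0 i.
Proof. by rewrite /xc row_mxKl. Qed.
Lemma yc_row (X Y : 'rV[R]_n) i : yc (row_mx X Y) i = Y 0 i.
Proof. by rewrite /yc row_mxKr. Qed.
Lemma xcJ u i : xc (Jc u) i = - yc u i.
Proof. by rewrite /Jc xc_row mxE. Qed.
Lemma ycJ u i : yc (Jc u) i = xc u i.
Proof. by rewrite /Jc yc_row. Qed.

Lemma rV_xyP u w : (forall i, xc u i = xc w i) -> (forall i, yc u i = yc w i) -> u = w.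
Proof.
move=> hx hy; apply/rowP => j.
rewrite -(fintype.splitK j); case: (fintype.split j) => i /=.
  by have := hx i; rewrite !xcE.
by have := hy i; rewrite !ycE.
Qed.

Lemma dot_split u w : dot u w = \sum_(i < n) xc u i * xc w i + \sum_(i < n) yc u i * yc w i.
Proof. by rewrite /dot big_split_ord /=; congr (_ + _); apply: eq_bigr => i _; rewrite ?xcE ?ycE. Qed.

End Coord.

Section Dot.
Variables (R : realType) (n : nat).
Local Notation V := 'rV[R]_(n + n).
Implicit Types u w x y : V.

Lemma dotC u w : dot u w = dot w u.
Proof. by apply: eq_bigr => j _; rewrite mulrC. Qed.
Lemma dotDr u x y : dot u (x + y) = dot u x + dot u y.
Proof. by rewrite /dot -big_split; apply: eq_bigr => j _; rewrite mxE mulrDr. Qed.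
Lemma dotZr u (a : R) x : dot u (a *: x) = a * dot u x.
Proof. by rewrite /dot mulr_sumr; apply: eq_bigr => j _; rewrite mxE mulrCA. Qed.
Lemma dotNr u x : dot u (- x) = - dot u x.
Proof. by rewrite /dot -sumrN; apply: eq_bigr => j _; rewrite mxE mulrN. Qed.
Lemma dotDl u x y : dot (x + y) u = dot x u + dot y u.
Proof. by rewrite dotC dotDr !(dotC u). Qed.
Lemma dotZl u (a : R) x : dot (a *: x) u = a * dot x u.
Proof. by rewrite dotC dotZr dotC. Qed.
Lemma dotNl u x : dot (- x) u = - dot x u.
Proof. by rewrite dotC dotNr dotC. Qed.

Lemma dotJ x u : dot x (Jc u) = - dot (Jc x) u.
Proof.
rewrite !dot_split opprD -!sumrN addrC; congr (_ + _); apply: eq_bigr => i _;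
  rewrite ?xcJ ?ycJ; ring.
Qed.
Lemma dotJJ x u : dot (Jc x) (Jc u) = dot x u.
Proof.
rewrite !dot_split addrC; congr (_ + _); apply: eq_bigr => i _; rewrite ?xcJ ?ycJ; ring.
Qed.
Lemma JJ u : Jc (Jc u) = - u.
Proof. by apply: rV_xyP => i; rewrite ?(xcJ, ycJ, xcN, ycN). Qed.
Lemma JD u w : Jc (u + w) = Jc u + Jc w.
Proof. by apply: rV_xyP => i; rewrite ?(xcJ, ycJ, xcD, ycD) // opprD. Qed.
Lemma JZ (a : R) u : Jc (a *: u) = a *: Jc u.
Proof. by apply: rV_xyP => i; rewrite ?(xcJ, ycJ, xcZ, ycZ) // mulrN. Qed.
Lemma JN u : Jc (- u) = - Jc u.
Proof. by apply: rV_xyP => i; rewrite ?(xcJ, ycJ, xcN, ycN). Qed.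

Lemma dot_delta (i : 'I_(n + n)) u : dot (delta_mx 0 i) u = u 0 i.
Proof.
rewrite /dot (bigD1 i) //= big1 ?addr0; first by rewrite mxE !eqxx mul1r.
by move=> j ji; rewrite mxE eqxx /= (negPf ji) mul0r.
Qed.

Lemma sum_delta u : u = \sum_(j < n + n) u 0 j *: delta_mx 0 j.
Proof.
apply/rowP => j; rewrite summxE (bigD1 j) //= big1 ?addr0.
  by rewrite !mxE !eqxx mulr1.
by move=> t tj; rewrite !mxE eqxx /= eq_sym (negPf tj) mulr0.
Qed.

End Dot.

Section Gram.
Variables (R : realType) (n k : nat) (p : 'rV[R]_(n + n)).
Local Notation V := 'rV[R]_(n + n).
Implicit Types u w x y : V.

Definition aV : V := row_mx (lsubmx p) 0.
Definition bV : V := row_mx (\row_i (if (i < k)%N then xc p i else 0))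
                            (\row_i (if (k <= i)%N then yc p i else 0)).
Definition tau : R := \sum_(i < n | (k <= i)%N) xc p i * yc p i.

Lemma xc_aV i : xc aV i = xc p i. Proof. by rewrite xc_row. Qed.
Lemma yc_aV i : yc aV i = 0. Proof. by rewrite yc_row mxE. Qed.
Lemma xc_bV i : xc bV i = if (i < k)%N then xc p i else 0. Proof. by rewrite xc_row mxE. Qed.
Lemma yc_bV i : yc bV i = if (k <= i)%N then yc p i else 0. Proof. by rewrite yc_row mxE. Qed.

Lemma AfV u : Af p u = dot aV u.
Proof.
rewrite dot_split [X in _ = _ + X]big1 ?addr0; last by move=> i _; rewrite yc_aV mul0r.
by apply: eq_bigr => i _; rewrite xc_aV.
Qed.

Lemma BfV u : Bf k p u = dot bV u.
Proof.
rewrite dot_split /Bf; congr (_ + _); rewrite big_mkcond /=; apply: eq_bigr => i _;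
  rewrite ?xc_bV ?yc_bV; by case: ifP; rewrite ?mul0r.
Qed.

Lemma sum_splitk (F : 'I_n -> R) :
  \sum_(i < n) F i = \sum_(i < n | (i < k)%N) F i + \sum_(i < n | (k <= i)%N) F i.
Proof.
rewrite (bigID (fun i : 'I_n => (i < k)%N)) /=; congr (_ + _).
by apply: eq_bigl => i; rewrite -leqNgt.
Qed.

Lemma HessA u w : Af u w + Af (Jc u) (Jc w) = dot u w.
Proof.
rewrite dot_split /Af; congr (_ + _); apply: eq_bigr => i _; rewrite ?xcJ; ring.
Qed.

Lemma HessB u w : Bf k u w + Bf k (Jc u) (Jc w) = dot u w.
Proof.
rewrite dot_split /Bf (sum_splitk (fun i => xc u i * xc w i)) (sum_splitk (fun i => yc u i * yc w i)).
have -> : \sum_(i < n | (i < k)%N) xc (Jc u) i * xc (Jc w) i = \sum_(i < n | (i < k)%N) yc u i * yc w i.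
  by apply: eq_bigr => i _; rewrite !xcJ mulrNN.
have -> : \sum_(i < n | (k <= i)%N) yc (Jc u) i * yc (Jc w) i = \sum_(i < n | (k <= i)%N) xc u i * xc w i.
  by apply: eq_bigr => i _; rewrite !ycJ.
ring.
Qed.

Lemma G_aa : dot aV aV = alpha p.
Proof. by rewrite -AfV alphaE; apply: eq_bigr => i _; rewrite xc_aV. Qed.
Lemma G_bb : dot bV bV = beta k p.
Proof.
rewrite -BfV betaE /Bf; congr (_ + _); apply: eq_bigr => i hi; rewrite ?xc_bV ?yc_bV hi //.
Qed.
Lemma G_ab : dot aV bV = sumxk k p.
Proof.
rewrite -AfV /Af /sumxk [RHS]big_mkcond /=; apply: eq_bigr => i _; rewrite xc_bV.
by case: ifP; rewrite ?mulr0 // expr2.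
Qed.
Lemma G_aJa : dot aV (Jc aV) = 0.
Proof. by rewrite -AfV /Af big1 // => i _; rewrite xcJ yc_aV oppr0 mulr0. Qed.
Lemma G_bJb : dot bV (Jc bV) = 0.
Proof.
rewrite -BfV /Bf [X in X + _]big1 => [|i hi]; last first.
  by rewrite xcJ yc_bV leqNgt hi /= oppr0 mulr0.
rewrite add0r big1 // => i hi.
by rewrite ycJ xc_bV ltnNge hi /= mulr0.
Qed.
Lemma G_aJb : dot aV (Jc bV) = - tau.
Proof.
rewrite -AfV /Af /tau -sumrN [RHS]big_mkcond /=; apply: eq_bigr => i _; rewrite xcJ yc_bV.
by case: ifP; rewrite ?oppr0 ?mulr0 ?oppr0 // mulrN.
Qed.
Lemma G_bJa : dot bV (Jc aV) = tau.
Proof.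
rewrite -BfV /Bf big1 ?add0r; last by move=> i _; rewrite xcJ yc_aV oppr0 mulr0.
by rewrite /tau; apply: eq_bigr => i _; rewrite ycJ xc_aV mulrC.
Qed.

Lemma w0E : w0 k p = beta k p *: aV - alpha p *: bV.
Proof.
apply: rV_xyP => i.
  rewrite /w0 xcN xcJ /v0 yc_row mxE xcD xcN !xcZ xc_aV xc_bV.
  by case: ifP => _; ring.
rewrite /w0 ycN ycJ /v0 xc_row mxE ycD ycN !ycZ yc_aV yc_bV.
by case: ifP => _; ring.
Qed.

Lemma v0E : v0 k p = Jc (w0 k p).
Proof. by rewrite /w0 JN JJ opprK. Qed.

End Gram.

Section Main.
Variables (R : realType) (n k : nat) (p : 'rV[R]_(n + n)).
Hypotheses (a0 : alpha p != 0) (b0 : beta k p != 0).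
Local Notation V := 'rV[R]_(n + n).
Implicit Types u w x y : V.
Local Notation X := (aV p).
Local Notation Y := (bV k p).
Local Notation s := (Num.sqrt (alpha p * beta k p)).

Definition PT u w := Phi k p u w + Phi k p (Jc u) (Jc w).

Lemma age : 0 <= alpha p.
Proof. by apply: sumr_ge0 => i _; exact: sqr_ge0. Qed.
Lemma bge : 0 <= beta k p.
Proof. by apply: addr_ge0; apply: sumr_ge0 => i _; exact: sqr_ge0. Qed.
Lemma s0 : s != 0.
Proof.
have hp : 0 < alpha p * beta k p by rewrite mulr_gt0 // lt_def ?a0 ?b0 ?age ?bge.
by rewrite gt_eqF // sqrtr_gt0.
Qed.
Lemma s2 : s ^+ 2 = alpha p * beta k p.
Proof. by rewrite sqr_sqrtr // mulr_ge0 // ?age ?bge. Qed.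

Lemma PT_expand u w : PT u w =
  ((alpha p + beta k p) * dot u w
   + 2 * (dot X u * dot Y w + dot X w * dot Y u
          + dot X (Jc u) * dot Y (Jc w) + dot X (Jc w) * dot Y (Jc u))) / s
  - ((beta k p * dot X u + alpha p * dot Y u) * (beta k p * dot X w + alpha p * dot Y w)
     + (beta k p * dot X (Jc u) + alpha p * dot Y (Jc u))
       * (beta k p * dot X (Jc w) + alpha p * dot Y (Jc w))) / s ^+ 3.
Proof.
have E1 : Af u w = dot u w - Af (Jc u) (Jc w) by rewrite -(HessA u w) addrK.
have E2 : Bf k u w = dot u w - Bf k (Jc u) (Jc w) by rewrite -(HessB k u w) addrK.
rewrite /PT /Phi /= E1 E2 !AfV !BfV.
have := s0; set t := Num.sqrt _ => t0.
field.
by rewrite t0.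
Qed.

Lemma dot0r u : dot u 0 = 0.
Proof. by rewrite /dot big1 // => j _; rewrite mxE mulr0. Qed.
Lemma J0 : Jc (0 : V) = 0.
Proof. by apply: rV_xyP => i; rewrite ?(xcJ, ycJ) !xcE !ycE !mxE ?oppr0. Qed.

Lemma PT_lin u (a : R) x y : PT u (a *: x + y) = a * PT u x + PT u y.
Proof.
rewrite !PT_expand !(JD, JZ, dotDr, dotZr).
have := s0; set t := Num.sqrt _ => t0.
field.
by rewrite t0.
Qed.

Lemma PT0 u : PT u 0 = 0.
Proof.
rewrite PT_expand J0 !dot0r.
have := s0; set t := Num.sqrt _ => t0.
field.
by rewrite t0.
Qed.

Lemma PT_scale u (a : R) x : PT u (a *: x) = a * PT u x.
Proof. by have := PT_lin u a x 0; rewrite addr0 PT0 addr0. Qed.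

Lemma PT_sum u w : PT u w = \sum_(j < n + n) w 0 j * PT u (delta_mx 0 j).
Proof.
rewrite {1}(sum_delta w).
elim/big_rec2: _ => [|j y1 y2 _ IH]; first exact: PT0.
by rewrite PT_lin IH.
Qed.

Lemma dot_sum u w : dot u w = \sum_(j < n + n) w 0 j * dot u (delta_mx 0 j).
Proof.
by apply: eq_bigr => j _; rewrite dotC dot_delta mulrC.
Qed.

Lemma M0E i j : M0 k p i j = PT (delta_mx 0 i) (delta_mx 0 j).
Proof. by rewrite /M0 mxE /ddc !D2_formula. Qed.

Lemma M0_eig (l : R) w : (forall u, PT u w = l * dot u w) ->
  M0 k p *m w^T = l *: w^T.
Proof.
move=> H; apply/matrixP => i j0; rewrite !mxE.
have -> : \sum_j M0 k p i j * w^T j j0 = PT (delta_mx 0 i) w.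
  rewrite PT_sum; apply: eq_bigr => j _; rewrite M0E !mxE (ord1 j0) mulrC //.
by rewrite H dot_delta (ord1 j0).
Qed.

Ltac gram := rewrite ?(G_aa, G_bb, G_ab, G_aJa, G_bJb, G_aJb, G_bJa, (dotC (bV k p) (aV p))).

Lemma PT_w0 u : PT u (w0 k p) = (2 * sumxk k p / s) * dot u (w0 k p).
Proof.
rewrite PT_expand w0E !(JD, JZ, JN, dotDr, dotZr, dotNr) !(dotC u).
gram.
move: s0 s2; set t := Num.sqrt _ => t0 t2; clearbody t.
have hb : beta k p = t ^+ 2 / alpha p by rewrite t2 [alpha p * _]mulrC mulfK.
rewrite hb.
field.
by rewrite t0 a0.
Qed.

Lemma PT_v0 u : PT u (v0 k p) = (2 * sumxk k p / s) * dot u (v0 k p).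
Proof.
rewrite PT_expand v0E w0E !(JD, JZ, JN, JJ, dotDr, dotZr, dotNr).
gram.
rewrite !(dotC u) (dotJ (aV p) u) (dotJ (bV k p) u).
move: s0 s2; set t := Num.sqrt _ => t0 t2; clearbody t.
have hb : beta k p = t ^+ 2 / alpha p by rewrite t2 [alpha p * _]mulrC mulfK.
rewrite hb.
field.
by rewrite t0 a0.
Qed.

Lemma PT_perp u w : dot w (v0 k p) = 0 -> dot w (w0 k p) = 0 ->
  PT u w = ((alpha p + beta k p) / s) * dot u w.
Proof.
rewrite v0E dotJ w0E !(dotDr, dotZr, dotNr) !(dotC (Jc w)) !(dotC w) => h1 h2.
have e1 : dot (bV k p) w = beta k p * dot (aV p) w / alpha p.
  apply: (mulfI a0); rewrite mulrCA mulfV // mulr1.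
  by apply/eqP; rewrite eq_sym -subr_eq0 h2.
have e2 : dot (bV k p) (Jc w) = beta k p * dot (aV p) (Jc w) / alpha p.
  apply: (mulfI a0); rewrite mulrCA mulfV // mulr1.
  by apply/eqP; rewrite eq_sym -subr_eq0 -oppr_eq0 h1.
rewrite PT_expand e1 e2.
move: s0 s2; set t := Num.sqrt _ => t0 t2; clearbody t.
have hb : beta k p = t ^+ 2 / alpha p by rewrite t2 [alpha p * _]mulrC mulfK.
rewrite hb.
field.
by rewrite t0 a0.
Qed.

Lemma entryDZ (a b : R) x y j : (a *: x + b *: y) 0 j = a * x 0 j + b * y 0 j.
Proof. by rewrite !mxE. Qed.

Lemma PT_S0 : S0 k p -> forall u w, PT u w = ((alpha p + beta k p) / s) * dot u w.
Proof.
move=> hS u w.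
have eY : bV k p = aV p.
  apply: rV_xyP => i.
    by rewrite xc_bV xc_aV; case: ltnP => // hi; rewrite (hS i hi).1.
  by rewrite yc_bV yc_aV; case: ifP => // hi; rewrite (hS i hi).2.
have hb : beta k p = alpha p by rewrite -G_bb eY G_aa.
rewrite PT_expand eY.
move: s0 s2; set t := Num.sqrt _ => t0 t2; clearbody t.
rewrite hb in t2 *.
rewrite (exprS t 2) t2.
field.
by rewrite t0 a0.
Qed.

Lemma trace_PT : \sum_(j < n + n) PT (delta_mx 0 j) (delta_mx 0 j) =
  ((alpha p + beta k p) * (n + n)%:R + 8 * sumxk k p) / s
  - 2 * (alpha p * beta k p) * (alpha p + beta k p + 2 * sumxk k p) / s ^+ 3.
Proof.
set Z := beta k p *: aV p + alpha p *: bV k p.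
set JX := Jc (aV p). set JY := Jc (bV k p).
have H : forall j, PT (delta_mx 0 j) (delta_mx 0 j) =
   (alpha p + beta k p) / s + 4 / s * (aV p 0 j * bV k p 0 j) + 4 / s * (JX 0 j * JY 0 j)
   + (- 1 / s ^+ 3) * (Z 0 j * Z 0 j) + (- 1 / s ^+ 3) * (Jc Z 0 j * Jc Z 0 j).
  move=> j.
  rewrite PT_expand dot_delta !(dotJ _ (delta_mx 0 j)) !(dotC _ (delta_mx 0 j)) !dot_delta.
  rewrite /Z JD !JZ -/JX -/JY.
  rewrite [(delta_mx 0 j) 0 j]mxE !eqxx /= !entryDZ.
  move: s0; set t := Num.sqrt _ => t0; clearbody t.
  field.
  by rewrite t0.
rewrite (eq_bigr _ (fun j _ => H j)) !big_split /= sumr_const card_ord -!mulr_sumr.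
have dE : forall x y : V, \sum_(i < n + n) x 0 i * y 0 i = dot x y by [].
rewrite !dE /JX /JY !dotJJ /Z !(dotDl, dotDr, dotZl, dotZr) (dotC (bV k p) (aV p)) G_aa G_bb G_ab.
rewrite -mulr_natr.
move: s0 s2; set t := Num.sqrt _ => t0 t2; clearbody t.
rewrite (exprS t 2) t2.
field.
by rewrite t0 a0 b0.
Qed.

Lemma cancel_s (x y : R) : s * (x / s * y) = x * y.
Proof. by move: s0; set t := Num.sqrt _ => t0; clearbody t; field. Qed.

Lemma rho_ge (i : 'I_n) : (k <= i)%N ->
  xc p i ^+ 2 + yc p i ^+ 2 <= alpha p + beta k p - 2 * sumxk k p.
Proof.
move=> hi.
have -> : alpha p + beta k p - 2 * sumxk k p =
  \sum_(j < n | (k <= j)%N) xc p j ^+ 2 + \sum_(j < n | (k <= j)%N) yc p j ^+ 2.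
  rewrite /beta /alpha (sum_splitk k (fun j => xc p j ^+ 2)) /sumxk; ring.
apply: lerD; rewrite (bigD1 i) //= lerDl; apply: sumr_ge0 => j _; exact: sqr_ge0.
Qed.

Lemma scal_S0 : ~ (n = 1%N /\ k = 0%N) ->
  (exists c : R, s *: M0 k p = c%:M) -> S0 k p.
Proof.
move=> hn [c /matrixP Hc].
have Hij : forall i j, s * PT (delta_mx 0 i) (delta_mx 0 j) = c *+ (i == j).
  by move=> i j; have := Hc i j; rewrite !mxE /ddc !D2_formula.
have Hw : forall i, s * PT (delta_mx 0 i) (w0 k p) = c * (w0 k p) 0 i.
  move=> i; rewrite PT_sum mulr_sumr.
  under eq_bigr do rewrite mulrCA Hij.
  rewrite (bigD1 i) //= eqxx mulr1n big1 => [|j ji]; last by rewrite eq_sym (negPf ji) mulr0n mulr0.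
  by rewrite addr0 mulrC.
have Hc2 : forall j, (c - 2 * sumxk k p) * (w0 k p) 0 j = 0.
  move=> j; have := Hw j; rewrite PT_w0 dot_delta cancel_s => E.
  by rewrite mulrBl E subrr.
have T : s * \sum_(j < n + n) PT (delta_mx 0 j) (delta_mx 0 j) = c * (n + n)%:R.
  rewrite mulr_sumr; under eq_bigr do rewrite Hij eqxx mulr1n.
  by rewrite sumr_const card_ord mulr_natr.
have key : forall j0, (w0 k p) 0 j0 != 0 ->
    0 < alpha p + beta k p - 2 * sumxk k p -> n = 1%N.
  move=> j0 wj0 rpos.
  have cE : c = 2 * sumxk k p.
    by apply/eqP; rewrite -subr_eq0; have := Hc2 j0; move/eqP; rewrite mulf_eq0 (negPf wj0) orbF.
  rewrite trace_PT cE in T.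
  have E : 2 * ((n%:R - 1) * (alpha p + beta k p - 2 * sumxk k p)) =
    s * (((alpha p + beta k p) * (n + n)%:R + 8 * sumxk k p) / s
    - 2 * (alpha p * beta k p) * (alpha p + beta k p + 2 * sumxk k p) / s ^+ 3)
    - 2 * sumxk k p * (n + n)%:R.
    rewrite natrD.
    move: s0 s2; set t := Num.sqrt _ => t0 t2; clearbody t.
    rewrite (exprS t 2) t2.
    field.
    by rewrite t0 a0 b0.
  rewrite T subrr in E.
  move/eqP: E; rewrite mulf_eq0 pnatr_eq0 /= mulf_eq0 (gt_eqF rpos) orbF subr_eq0.
  by rewrite pnatr_eq1 => /eqP.
move=> i hi.
have hin : (i < n)%N := ltn_ord i.
have contra1 : n = 1%N -> False.
  move=> n1; apply: hn; split => //; apply/eqP; rewrite -leqn0.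
  by apply: (leq_trans hi); rewrite -ltnS -n1.
split.
  apply/eqP; apply/negP => /negP xi; apply: contra1.
  apply: (key (lshift n i)).
    by rewrite -xcE w0E xcD xcN !xcZ xc_aV xc_bV ltnNge hi /= mulr0 subr0 mulf_neq0.
  apply: (lt_le_trans _ (rho_ge hi)).
  apply: (@lt_le_trans _ _ (xc p i ^+ 2)); first by rewrite lt_def expf_neq0 // sqr_ge0.
  by rewrite lerDl sqr_ge0.
apply/eqP; apply/negP => /negP yi; apply: contra1.
apply: (key (rshift n i)).
  by rewrite -ycE w0E ycD ycN !ycZ yc_aV yc_bV hi /= mulr0 add0r oppr_eq0 mulf_neq0.
apply: (lt_le_trans _ (rho_ge hi)).
apply: (@lt_le_trans _ _ (yc p i ^+ 2)); first by rewrite lt_def expf_neq0 // sqr_ge0.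
by rewrite lerDr sqr_ge0.
Qed.

End Main.

Lemma sM0E (R : realType) (n k : nat) (p : 'rV[R]_(n + n)) :
  alpha p != 0 -> beta k p != 0 -> forall i j,
  (Num.sqrt (alpha p * beta k p) *: M0 k p) i j =
  Num.sqrt (alpha p * beta k p) * PT k p (delta_mx 0 i) (delta_mx 0 j).
Proof. by move=> a0 b0 i j; rewrite [LHS]mxE M0E. Qed.

Unset Implicit Arguments.

Theorem lemma3p1 (R : realType) (n k : nat) (hk : (k <= n)%N) :
  (forall p : 'rV[R]_(n + n), alpha p != 0 -> beta k p != 0 ->
     (forall w : 'rV[R]_(n + n),
        (exists a b : R, w = a *: v0 k p + b *: w0 k p) ->
        M0 k p *m w^T = (2 * sumxk k p / Num.sqrt (alpha p * beta k p)) *: w^T) /\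
     (forall w : 'rV[R]_(n + n),
        dot w (v0 k p) = 0 -> dot w (w0 k p) = 0 ->
        M0 k p *m w^T = ((alpha p + beta k p) / Num.sqrt (alpha p * beta k p)) *: w^T))
  /\
  (~ (n = 1%N /\ k = 0%N) ->
   forall p : 'rV[R]_(n + n), alpha p != 0 -> beta k p != 0 ->
     ((exists c : R, Num.sqrt (alpha p * beta k p) *: M0 k p = c%:M) <-> S0 k p)).
Proof.
split.
  move=> p a0 b0; split.
    move=> w [a [b ->]]; apply: (M0_eig a0 b0) => u.
    rewrite (PT_lin a0 b0) (PT_scale a0 b0 u b (w0 k p)) (PT_v0 a0 b0) (PT_w0 a0 b0).
    rewrite !(dotDr, dotZr); ring.
  by move=> w h1 h2; apply: (M0_eig a0 b0) => u; exact: PT_perp.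
move=> hn p a0 b0; split; first exact: scal_S0.
move=> hS; exists (alpha p + beta k p); apply/matrixP => i j.
rewrite (sM0E a0 b0) (PT_S0 a0 b0 hS) dot_delta cancel_s // [in LHS]mxE eqxx /= mxE.
by rewrite mulr_natr.
Qed.
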